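(* Consider the mixed CAC game (defined in the context) with $\mathcal V_c\neq\emptyset$ and $\mathcal V_a\neq\emptyset$. (1) If $x^*\in\mathcal X$ is a Nash equilibrium, then, writing $z^*=z(x^* )$, $z_c^*=z_c(x^* )$, $z_a^*=z_a(x^* )$, the following hold for every $\epsilon_c\in(0,\tfrac1n]$ and every $\epsilon_a\in(\tfrac1n,\tfrac2n]$: $$ \begin{cases} z_c^*=F_c\!\left(\frac{n}{n-1}(z^*-\epsilon_c)\right),\\[2pt] G_a\!\left(\frac{n}{n-1}(z^*-\epsilon_a)\right)\ \ge\ z_a^*\ \ge\ G_a\!\left(\frac{n}{n-1}z^*\right),\\[2pt] z^*=\alpha z_c^*+(1-\alpha)z_a^*. \end{cases} $$ (2) Conversely, if $z^*\in\{0,\tfrac1n,\dots,1\}$, $z_c^*\in\{0,\tfrac1{n_c},\dots,1\}$ and $z_a^*\in\{0,\tfrac1{n_a},\dots,1\}$ satisfy the three conditions above for every $\epsilon_c\in(0,\tfrac1n]$ and every $\epsilon_a\in(\tfrac1n,\tfrac2n]$, then there exists a Nash equilibrium $x^*\in\mathcal X$ with $z(x^* )=z^*$, $z_c(x^* )=z_c^*$ and $z_a(x^* )=z_a^*$.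
   Context: Let $\mathcal V$ be a finite set of $n\ge 2$ agents, partitioned into disjoint sets $\mathcal V_c$ (coordinating agents) and $\mathcal V_a$ (anti-coordinating agents), $\mathcal V=\mathcal V_c\cup\mathcal V_a$. Set $\delta_i=+1$ if $i\in\mathcal V_c$ and $\delta_i=-1$ if $i\in\mathcal V_a$. Given real weights $d_i$ ($i\in\mathcal V$), the mixed coordination/anti-coordination (CAC) game has action set $\{-1,+1\}$ for every agent, configuration space $\mathcal X=\{-1,+1\}^{\mathcal V}$, and utilities $u_i(x)=\delta_i\big(\sum_{j\neq i}x_ix_j-d_ix_i\big)$. A (pure) Nash equilibrium is an $x\in\mathcal X$ such that $u_i(x)\ge u_i(y_i,x_{-i})$ for every $i\in\mathcal V$ and $y_i\in\{-1,+1\}$. The threshold of agent $i$ is $r_i=\tfrac12+\tfrac{d_i}{2(n-1)}$. Let $n_c=|\mathcal V_c|$, $n_a=|\mathcal V_a|$, $\alpha=n_c/n$. For $x\in\mathcal X$ let $z(x)=\frac1n|\{i\in\mathcal V: x_i=+1\}|$, $z_c(x)=\frac1{n_c}|\{i\in\mathcal V_c: x_i=+1\}|$, $z_a(x)=\frac1{n_a}|\{i\in\mathcal V_a: x_i=+1\}|$. Define $F_c(t)=\frac1{n_c}|\{i\in\mathcal V_c: r_i\le t\}|$ (threshold CDF of coordinating agents) and $G_a(t)=\frac1{n_a}|\{i\in\mathcal V_a: r_i> t\}|$ (threshold complementary CDF of anti-coordinating agents), for $t\in\mathbb R$. *)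

(* Defs.v *)
From HB Require Import structures.
From mathcomp Require Import all_boot all_order all_algebra.
Set Implicit Arguments. Unset Strict Implicit. Unset Printing Implicit Defensive.
Import Order.TTheory GRing.Theory Num.Theory.
Local Open Scope ring_scope.

Section CAC.
Variables (R : realFieldType) (n : nat).

Definition Va (Vc : {set 'I_n}) : {set 'I_n} := ~: Vc.

Definition act (b : bool) : R := if b then 1 else -1.

Definition delta (Vc : {set 'I_n}) (i : 'I_n) : R := if i \in Vc then 1 else -1.

Definition utility (Vc : {set 'I_n}) (d : 'I_n -> R) (i : 'I_n)
    (x : 'I_n -> bool) : R :=
  delta Vc i * (\sum_(j < n | j != i) act (x i) * act (x j) - d i * act (x i)).

Definition upd (x : 'I_n -> bool) (i : 'I_n) (b : bool) : 'I_n -> bool :=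
  fun j => if j == i then b else x j.

Definition nash (Vc : {set 'I_n}) (d : 'I_n -> R) (x : 'I_n -> bool) : Prop :=
  forall (i : 'I_n) (b : bool), utility Vc d i (upd x i b) <= utility Vc d i x.

Definition thr (d : 'I_n -> R) (i : 'I_n) : R :=
  1 / 2 + d i / (2 * (n%:R - 1)).

Definition zz (x : 'I_n -> bool) : R := #|[set i | x i]|%:R / n%:R.
Definition zc (Vc : {set 'I_n}) (x : 'I_n -> bool) : R :=
  #|[set i in Vc | x i]|%:R / #|Vc|%:R.
Definition za (Vc : {set 'I_n}) (x : 'I_n -> bool) : R :=
  #|[set i in Va Vc | x i]|%:R / #|Va Vc|%:R.

Definition alpha (Vc : {set 'I_n}) : R := #|Vc|%:R / n%:R.

Definition Fc (Vc : {set 'I_n}) (d : 'I_n -> R) (t : R) : R :=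
  #|[set i in Vc | thr d i <= t]|%:R / #|Vc|%:R.
Definition Ga (Vc : {set 'I_n}) (d : 'I_n -> R) (t : R) : R :=
  #|[set i in Va Vc | t < thr d i]|%:R / #|Va Vc|%:R.

Definition cac_cond (Vc : {set 'I_n}) (d : 'I_n -> R) (z zc' za' : R) : Prop :=
  [/\ (forall ec : R, 0 < ec -> ec <= 1 / n%:R ->
         zc' = Fc Vc d (n%:R / (n%:R - 1) * (z - ec))),
      (forall ea : R, 1 / n%:R < ea -> ea <= 2 / n%:R ->
         Ga Vc d (n%:R / (n%:R - 1) * (z - ea)) >= za' /\
         za' >= Ga Vc d (n%:R / (n%:R - 1) * z))
    & z = alpha Vc * zc' + (1 - alpha Vc) * za'].

Definition grid (m : nat) (v : R) : Prop :=
  exists2 k : nat, (k <= m)%N & v = k%:R / m%:R.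

End CAC.

(* Main.v *)
Require Import Defs.
From HB Require Import structures.
From mathcomp Require Import all_boot all_order all_algebra.
From mathcomp Require Import ring lra zify.
Set Implicit Arguments. Unset Strict Implicit.
Import Order.TTheory GRing.Theory Num.Theory.
Local Open Scope ring_scope.

Lemma exists_between (T : finType) (A B : {set T}) m :
  A \subset B -> (#|A| <= m)%N -> (m <= #|B|)%N ->
  exists C : {set T}, [/\ A \subset C, C \subset B & #|C| = m].
Proof.
have [k hk] : exists k, (#|B| < k)%N by exists #|B|.+1.
elim: k B hk => // k IH B hk AB hA hB.
case: (eqVneq #|B| m) => hm; first by exists B.
have ltAB : (#|A| < #|B|)%N by apply: (leq_ltn_trans hA); rewrite ltn_neqAle eq_sym hm hB.
have : ~~ (B \subset A).
  by apply/negP => BA; move: ltAB; rewrite (_ : A = B) ?ltnn //; apply/eqP; rewrite eqEsubset AB BA.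
case/subsetPn => b bB bA.
have cB := cardsD1 b B; rewrite bB in cB.
have hk' : (#|B :\ b| < k)%N by move: hk; rewrite cB /=; lia.
have AB' : A \subset B :\ b.
  by apply/subsetP => y yA; rewrite !inE (subsetP AB) // andbT; apply: contraNneq bA => <-.
have hB' : (m <= #|B :\ b|)%N by move: hB hm; rewrite cB /=; lia.
have [C [h1 h2 h3]] := IH (B :\ b) hk' AB' hA hB'.
exists C; split => //; apply: (subset_trans h2); exact: subsetDl.
Qed.

Lemma exists_gap (R : realFieldType) (I : eqType) (f : I -> R) (l a : R) (s : seq I) :
  l < a -> exists t, [/\ l <= t, t < a & forall j, j \in s -> (t < f j) = (a <= f j)].
Proof.
move=> la; elim: s => [|j0 s [t [h1 h2 h3]]]; first by exists l.
case: (ltP (f j0) a) => hj.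
- exists (Num.max t (f j0)); split.
  + by rewrite le_max h1.
  + by rewrite gt_max h2 hj.
  + move=> j; rewrite inE => /orP [/eqP -> | js].
    * rewrite gt_max ltxx andbF; apply/esym/negbTE; by rewrite -ltNge.
    * rewrite gt_max h3 //; apply/andP/idP => [[]//| h]; split => //.
      exact: lt_le_trans hj h.
- exists t; split => // j; rewrite inE => /orP [/eqP -> | js]; last exact: h3.
  by rewrite hj; apply: lt_le_trans hj.
Qed.

Section H.
Variables (R : realFieldType) (n : nat).

Lemma act_nat (b : bool) : act R b = 2 * (b : nat)%:R - 1.
Proof. by case: b => /=; rewrite ?mulr1 ?mulr0; lra. Qed.

Lemma sum_act_all (x : 'I_n -> bool) :
  \sum_(j < n) act R (x j) = 2 * (#|[set j | x j]|)%:R - n%:R.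
Proof.
under eq_bigr do rewrite act_nat.
rewrite big_split /= sumrN -mulr_sumr -natr_sum sumr_const card_ord.
congr (2 * _%:R - _).
rewrite cardsE -sum1_card [RHS]big_mkcond /=.
apply: eq_bigr => j _. by rewrite unfold_in; case: (x j).
Qed.

Lemma sum_act (x : 'I_n -> bool) (i : 'I_n) :
  \sum_(j < n | j != i) act R (x j) =
  2 * (#|[set j | x j]|)%:R - n%:R - act R (x i).
Proof. rewrite -sum_act_all [in RHS](bigD1 i) //=; ring. Qed.


Variables (Vc : {set 'I_n}) (d : 'I_n -> R).

Lemma util_upd (x : 'I_n -> bool) i b :
  utility Vc d i (upd x i b) = delta R Vc i *
    (act R b * (2 * (#|[set j | x j]|)%:R - n%:R - act R (x i)) - d i * act R b).
Proof.
rewrite /utility /upd eqxx -sum_act mulr_sumr; congr (_ * (_ - _)).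
by apply: eq_bigr => j /negbTE ->.
Qed.

Lemma util_self (x : 'I_n -> bool) i :
  utility Vc d i x = delta R Vc i *
    (act R (x i) * (2 * (#|[set j | x j]|)%:R - n%:R - act R (x i)) - d i * act R (x i)).
Proof. by rewrite /utility -sum_act mulr_sumr. Qed.

Hypothesis n2 : (2 <= n)%N.

Lemma N_gt0 : 0 < n%:R - 1 :> R.
Proof. rewrite subr_gt0 (_ : 1 = 1%:R) // ltr_nat. by case: n n2 => [|[]]. Qed.

Lemma thr_le i (a : R) : (thr d i <= a / (n%:R - 1)) = (n%:R - 1 + d i <= 2 * a).
Proof.
have N0 := N_gt0; rewrite ler_pdivlMr // /thr.
have -> : (1 / 2 + d i / (2 * (n%:R - 1))) * (n%:R - 1) = (n%:R - 1 + d i) / 2.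
  by field; rewrite gt_eqF.
by rewrite ler_pdivrMr // mulrC.
Qed.

Lemma thr_ge i (a : R) : (a / (n%:R - 1) <= thr d i) = (2 * a <= n%:R - 1 + d i).
Proof.
have N0 := N_gt0; rewrite ler_pdivrMr // /thr.
have -> : (1 / 2 + d i / (2 * (n%:R - 1))) * (n%:R - 1) = (n%:R - 1 + d i) / 2.
  by field; rewrite gt_eqF.
by rewrite ler_pdivlMr // mulrC.
Qed.

Definition nash_at (x : 'I_n -> bool) (K : R) (i : 'I_n) : Prop :=
  if i \in Vc then (if x i then thr d i <= (K - 1) / (n%:R - 1)
                    else K / (n%:R - 1) <= thr d i)
  else (if x i then (K - 1) / (n%:R - 1) <= thr d i
        else thr d i <= K / (n%:R - 1)).

Lemma nash_char (x : 'I_n -> bool) :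
  nash Vc d x <-> forall i, nash_at x (#|[set j | x j]|)%:R i.
Proof.
set K := (#|[set j | x j]|)%:R; split.
- move=> H i; have := H i (~~ x i); rewrite util_upd util_self /nash_at /delta.
  case: (i \in Vc); case: (x i); rewrite /= ?thr_le ?thr_ge; lra.
- move=> H i b; rewrite util_upd util_self; move: (H i); rewrite /nash_at /delta.
  case: (i \in Vc); case: (x i); case: b; rewrite /= ?thr_le ?thr_ge; lra.
Qed.


Lemma divN_le (a b : R) : (a / (n%:R - 1) <= b / (n%:R - 1)) = (a <= b).
Proof. by rewrite ler_pM2r // invr_gt0 N_gt0. Qed.
Lemma divN_lt (a b : R) : (a / (n%:R - 1) < b / (n%:R - 1)) = (a < b).
Proof. by rewrite ltr_pM2r // invr_gt0 N_gt0. Qed.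

Lemma n_gt0 : 0 < n%:R :> R.
Proof. by rewrite ltr0n; case: n n2. Qed.

Lemma tE (K : nat) (e : R) :
  n%:R / (n%:R - 1) * (K%:R / n%:R - e) = (K%:R - n%:R * e) / (n%:R - 1).
Proof. have := n_gt0; have := N_gt0 => h1 h2. field. by rewrite !gt_eqF. Qed.

Lemma ne_le (e : R) c : (e <= c / n%:R) = (n%:R * e <= c).
Proof. by rewrite ler_pdivlMr ?n_gt0 // mulrC. Qed.
Lemma ne_lt (e : R) c : (c / n%:R < e) = (c < n%:R * e).
Proof. by rewrite ltr_pdivrMr ?n_gt0 // mulrC. Qed.

Lemma card_split (x : 'I_n -> bool) :
  #|[set j | x j]| = (#|[set i in Vc | x i]| + #|[set i in Va Vc | x i]|)%N.
Proof.
rewrite -(cardsID Vc [set j | x j]); congr (_ + _)%N; apply: eq_card => i;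
  by rewrite !inE andbC.
Qed.

Lemma cardVa : (#|Vc| + #|Va Vc|)%N = n.
Proof. by rewrite /Va cardsC card_ord. Qed.

Lemma part1 (x : 'I_n -> bool) : Vc != set0 -> Va Vc != set0 ->
  nash Vc d x -> cac_cond Vc d (zz R x) (zc R Vc x) (za R Vc x).
Proof.
move=> Vc0 Va0 /nash_char H.
set K := #|[set j | x j]|.
have N0 := N_gt0; have n0 := n_gt0.
split.
- move=> e e0; rewrite ne_le => e1.
  have ne0 : 0 < n%:R * e by rewrite mulr_gt0.
  rewrite /zc /Fc /zz tE; congr (_%:R / _); apply: eq_card => i; rewrite !inE.
  move: (H i); rewrite /nash_at; case: (i \in Vc) => //=; case: (x i) => h.
  + apply/esym; apply: (le_trans h); rewrite divN_le; lra.
  + apply/esym/negbTE; rewrite -ltNge; apply: lt_le_trans h; rewrite divN_lt; lra.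
- move=> e; rewrite ne_lt ne_le => e1 e2; split.
  + rewrite /za /Ga /zz tE; apply: ler_wpM2r; first by rewrite invr_ge0 ler0n.
    rewrite ler_nat; apply: subset_leq_card; apply/subsetP => i; rewrite !inE.
    move: (H i); rewrite /nash_at;
    case: (i \in Vc) => //=; case: (x i) => //= h _.
    apply: lt_le_trans h; rewrite divN_lt; lra.
  + rewrite /za /Ga /zz (_ : n%:R / (n%:R - 1) * (K%:R / n%:R) = K%:R / (n%:R - 1)); last by field; rewrite !gt_eqF.
    apply: ler_wpM2r; first by rewrite invr_ge0 ler0n.
    rewrite ler_nat; apply: subset_leq_card; apply/subsetP => i; rewrite !inE.
    move: (H i); rewrite /nash_at; case: (i \in Vc) => //=; case: (x i) => //= h.
    by rewrite ltNge h.
- have a0 : (0 < #|Vc|)%N by rewrite card_gt0.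
  have b0 : (0 < #|Va Vc|)%N by rewrite card_gt0.
  have hn : n%:R = #|Vc|%:R + #|Va Vc|%:R :> R by rewrite -natrD cardVa.
  rewrite /zz /zc /za /alpha /K card_split natrD hn.
  have a0' : #|Vc|%:R != 0 :> R by rewrite pnatr_eq0 -lt0n.
  have b0' : #|Va Vc|%:R != 0 :> R by rewrite pnatr_eq0 -lt0n.
  have c0 : #|Vc|%:R + #|Va Vc|%:R != 0 :> R by rewrite -hn gt_eqF.
  by field; rewrite a0' b0' c0.
Qed.


Lemma divc_inj (a b m : nat) : (0 < m)%N -> a%:R / m%:R = b%:R / m%:R :> R -> a = b.
Proof.
move=> m0 h; have m0' : m%:R != 0 :> R by rewrite pnatr_eq0 -lt0n.
by move/(mulIf (invr_neq0 m0'))/eqP: h; rewrite eqr_nat => /eqP.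
Qed.

Lemma divc_le (a b m : nat) : (0 < m)%N -> a%:R / m%:R <= b%:R / m%:R :> R -> (a <= b)%N.
Proof.
move=> m0; rewrite ler_pM2r ?ler_nat //.
by rewrite invr_gt0 ltr0n.
Qed.


Lemma part2 (z zc' za' : R) : Vc != set0 -> Va Vc != set0 ->
  grid n z -> grid #|Vc| zc' -> grid #|Va Vc| za' ->
  cac_cond Vc d z zc' za' ->
  exists x : 'I_n -> bool,
    [/\ nash Vc d x, zz R x = z, zc R Vc x = zc' & za R Vc x = za'].
Proof.
move=> Vc0 Va0 [k _ ->] [kc _ ->] [ka _ ->] [C1 C2 C3].
have N0 := N_gt0; have n0 := n_gt0.
have a0 : (0 < #|Vc|)%N by rewrite card_gt0.
have b0 : (0 < #|Va Vc|)%N by rewrite card_gt0.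
have hn : n%:R = #|Vc|%:R + #|Va Vc|%:R :> R by rewrite -natrD cardVa.
have a0' : #|Vc|%:R != 0 :> R by rewrite pnatr_eq0 -lt0n.
have b0' : #|Va Vc|%:R != 0 :> R by rewrite pnatr_eq0 -lt0n.
have n0' : n%:R != 0 :> R by rewrite gt_eqF.
have N0' : n%:R - 1 != 0 :> R by rewrite gt_eqF.
have hc : forall e : R, 0 < e -> n%:R * e <= 1 ->
    #|[set i in Vc | thr d i <= (k%:R - n%:R * e) / (n%:R - 1)]| = kc.
  move=> e e0 e1; apply: (divc_inj a0).
  by rewrite (C1 e e0) ?ne_le // /Fc tE.
have hc1 : #|[set i in Vc | thr d i <= (k%:R - 1) / (n%:R - 1)]| = kc.
  have := hc (1 / n%:R); rewrite mulrA mulr1 divff // => -> //.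
  by rewrite divr_gt0 ?ltr01.
set A := [set i in Va Vc | k%:R / (n%:R - 1) < thr d i].
set B := [set i in Va Vc | (k%:R - 1) / (n%:R - 1) <= thr d i].
have hA : (#|A| <= ka)%N.
  have h12 : 1 / n%:R < 2 / n%:R :> R.
    rewrite ltr_pM2r ?invr_gt0 //; lra.
  have [_] := C2 (2 / n%:R) h12 (lexx _).
  rewrite /Ga (_ : n%:R / (n%:R - 1) * (k%:R / n%:R) = k%:R / (n%:R - 1) :> R).
    exact: divc_le.
  by field; rewrite ?n0' ?N0'.
have hB : (ka <= #|B|)%N.
  have lta : (k%:R - 2) / (n%:R - 1) < (k%:R - 1) / (n%:R - 1) :> R by rewrite divN_lt; lra.
  have [t [t1 t2 t3]] := exists_gap (thr d) (enum 'I_n) lta.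
  have e1 : 1 / n%:R < (k%:R - (n%:R - 1) * t) / n%:R.
    rewrite ltr_pM2r ?invr_gt0 //; move: t2; rewrite ltr_pdivlMr //; lra.
  have e2 : (k%:R - (n%:R - 1) * t) / n%:R <= 2 / n%:R.
    rewrite ler_pM2r ?invr_gt0 //; move: t1; rewrite ler_pdivrMr //; lra.
  have [+ _] := C2 _ e1 e2.
  rewrite /Ga (_ : n%:R / (n%:R - 1) * (k%:R / n%:R - (k%:R - (n%:R - 1) * t) / n%:R) = t);
    last by field; rewrite ?n0' ?N0'.
  move/divc_le => /(_ b0); congr (_ <= _)%N; apply: eq_card => i.
  by rewrite !inE t3 // mem_enum.
have AB : A \subset B.
  apply/subsetP => i; rewrite !inE => /andP [-> h]; apply/ltW/(le_lt_trans _ h).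
  by rewrite divN_le; lra.
have [C [CA CB Cc]] := exists_between AB hA hB.
pose x i := if i \in Vc then thr d i <= (k%:R - 1) / (n%:R - 1) else i \in C.
have hxc : [set i in Vc | x i] = [set i in Vc | thr d i <= (k%:R - 1) / (n%:R - 1)].
  by apply/setP => i; rewrite !inE /x; case: (i \in Vc).
have hxa : [set i in Va Vc | x i] = C.
  apply/setP => i; rewrite !inE /x; case: (boolP (i \in Vc)) => hi /=.
    apply/esym/negbTE; apply: contraL hi => /(subsetP CB); by rewrite !inE => /andP [].
  by [].
have hk : k = (kc + ka)%N.
  have hk' : k%:R = (kc + ka)%:R :> R.
    apply/eqP; rewrite -subr_eq0; apply/eqP.
    apply: (mulIf (invr_neq0 n0')); rewrite mul0r mulrBl -/(k%:R / n%:R) C3 /alpha.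
    rewrite hn; field; rewrite -hn; apply/and3P; split => //.
  by apply/eqP; rewrite -(eqr_nat R) hk'.
have hK : #|[set j | x j]| = k by rewrite card_split hxc hxa hc1 Cc hk.
exists x; split.
- apply/nash_char => i; rewrite hK /nash_at; case: (boolP (i \in Vc)) => hi.
  + rewrite /x hi; case: ifP => // /negbT; rewrite -ltNge => hlt.
    rewrite leNgt; apply/negP => hlt2.
    pose e := (k%:R - (n%:R - 1) * thr d i) / n%:R.
    have ne : n%:R * e = k%:R - (n%:R - 1) * thr d i by rewrite /e; field; rewrite ?n0' ?N0'.
    have e0 : 0 < e.
      rewrite divr_gt0 // subr_gt0 mulrC -ltr_pdivlMr //.
    have e1 : n%:R * e <= 1.
      by rewrite ne; move: hlt; rewrite ltr_pdivrMr // mulrC; lra.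
    have := hc e e0 e1; rewrite ne (_ : (k%:R - (k%:R - (n%:R - 1) * thr d i)) /
       (n%:R - 1) = thr d i); last by field; rewrite ?n0' ?N0'.
    move=> hce.
    have : [set i0 in Vc | thr d i0 <= (k%:R - 1) / (n%:R - 1)] \proper
           [set i0 in Vc | thr d i0 <= thr d i].
      apply/properP; split.
        apply/subsetP => j; rewrite !inE => /andP [-> h] /=; apply: (le_trans h).
        exact: ltW.
      by exists i; rewrite !inE hi //= -ltNge.
    by move/proper_card; rewrite hce hc1 ltnn.
  + rewrite /x (negbTE hi); case: ifP => hiC.
      by move: (subsetP CB i hiC); rewrite !inE => /andP [].
    rewrite leNgt; apply/negP => h; move/negbT: hiC => /negP; apply.
    by apply: (subsetP CA); rewrite !inE hi h.
- by rewrite /zz hK.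
- by rewrite /zc hxc hc1.
- by rewrite /za hxa Cc.
Qed.

End H.

Theorem theorem1 (R : realFieldType) (n : nat) (Vc : {set 'I_n})
    (d : 'I_n -> R) :
  (2 <= n)%N -> Vc != set0 -> Va Vc != set0 ->
  (forall x : 'I_n -> bool, nash Vc d x ->
     cac_cond Vc d (zz R x) (zc R Vc x) (za R Vc x)) /\
  (forall z zc' za' : R,
     grid n z -> grid #|Vc| zc' -> grid #|Va Vc| za' ->
     cac_cond Vc d z zc' za' ->
     exists x : 'I_n -> bool,
       [/\ nash Vc d x, zz R x = z, zc R Vc x = zc' & za R Vc x = za']).
Proof.
move=> n2 Vc0 Va0; split.
- by move=> x; apply: part1.
- by move=> z zc' za'; apply: part2.
Qed.
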